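(* For any pair of simplices $\sigma,\tau$ on $\gamma_d$, exactly one of the following four cases occurs: (A) $\sigma$ and $\tau$ do not overlap in $\mathbb{R}^d$; equivalently, they are not $(d+2)$-interlacing. (B) $\sigma<_{d+1}\tau$; equivalently, $\sigma,\tau$ are $(d+2)$-interlacing with a sequence beginning with an element of $\sigma$ but not with one beginning with an element of $\tau$ when $d$ is even, and with a sequence beginning with an element of $\tau$ but not with one beginning with an element of $\sigma$ when $d$ is odd. (C) $\tau<_{d+1}\sigma$; equivalently, the condition of (B) holds with the roles of $\sigma$ and $\tau$ interchanged. (D) the liftings $\hat\sigma$ and $\hat\tau$ overlap in $\mathbb{R}^{d+1}$; equivalently, $\sigma$ and $\tau$ are $(d+3)$-interlacing.
   Context: $\gamma_d=\{(t,t^2,\dots,t^d):t\in\mathbb{R}\}$; points on it are ordered by parameter. A simplex on $\gamma_d$ is a subset $\sigma\subseteq\gamma_d$ with $|\sigma|\le d+1$ (sizes of $\sigma,\tau$ may differ), identified with $\mathrm{conv}(\sigma)$. Simplices overlap in $\mathbb{R}^d$ if $\mathrm{conv}(\sigma)\cap\mathrm{conv}(\tau)\supsetneq\mathrm{conv}(\sigma\cap\tau)$. Subsets $\sigma,\tau$ are $k$-interlacing if there are $v_1<\dots<v_k$ in $\sigma\cup\tau$ with alternating membership, beginning either with $v_1\in\sigma$ ($v_1\in\sigma,v_2\in\tau,\dots$) or with $v_1\in\tau$ ($v_1\in\tau,v_2\in\sigma,\dots$). The lifting of $\sigma=\{\gamma_d(t_i)\}$ is $\hat\sigma=\{\gamma_{d+1}(t_i)\}\subseteq\mathbb{R}^{d+1}$;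 the height function $h_\sigma:\mathrm{conv}(\sigma)\to\mathbb{R}$ gives the last coordinate of the point of $\mathrm{conv}(\hat\sigma)$ projecting to $p$. $\sigma<_{d+1}\tau$ means $\sigma,\tau$ overlap in $\mathbb{R}^d$ and $h_\sigma\le h_\tau$ on $\mathrm{conv}(\sigma)\cap\mathrm{conv}(\tau)$. *)

(* Defs.v *)
From HB Require Import structures.
From mathcomp Require Import all_boot all_order all_algebra.
From mathcomp Require Import reals.
Unset Printing Implicit Defensive.
Import Order.TTheory GRing.Theory Num.Theory.
Local Open Scope ring_scope.

(* A simplex on the moment curve gamma_d is represented by the (duplicate-free)
   list of parameters t of its vertices gamma_d(t). *)

Section Defs.
Variable R : realType.

Definition moment (d : nat) (t : R) : 'rV[R]_d := \row_(i < d) t ^+ i.+1.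

Definition simplex_on (d : nat) (s : seq R) : Prop :=
  uniq s /\ (size s <= d.+1)%N.

Definition conv (d : nat) (s : seq R) (p : 'rV[R]_d) : Prop :=
  exists w : R -> R,
    (forall t, t \in s -> 0 <= w t) /\
    \sum_(t <- s) w t = 1 /\
    p = \sum_(t <- s) w t *: moment d t.

Definition seqI (s u : seq R) : seq R := [seq x <- s | x \in u].

Definition overlap (d : nat) (s u : seq R) : Prop :=
  (forall p, conv d (seqI s u) p -> conv d s p /\ conv d u p) /\
  (exists p, conv d s p /\ conv d u p /\ ~ conv d (seqI s u) p).

Definition interlacing_from (k : nat) (s u : seq R) : Prop :=
  exists v : nat -> R,
    (forall i, (i.+1 < k)%N -> v i < v i.+1) /\
    (forall i, (i < k)%N -> if odd i then v i \in u else v i \in s).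

Definition interlacing (k : nat) (s u : seq R) : Prop :=
  interlacing_from k s u \/ interlacing_from k u s.

Definition proj (d : nat) (q : 'rV[R]_d.+1) : 'rV[R]_d :=
  \row_(i < d) q 0 (widen_ord (leqnSn d) i).
Definition lastc (d : nat) (q : 'rV[R]_d.+1) : R := q 0 ord_max.

(* sigma <_{d+1} tau : they overlap in R^d and h_sigma <= h_tau on
   conv(sigma) ∩ conv(tau); here h_sigma(p) is the last coordinate of the
   point q of conv(hat sigma) (the convex hull of the lifted vertices
   gamma_{d+1}(t_i)) with proj q = p. *)
Definition below (d : nat) (s u : seq R) : Prop :=
  overlap d s u /\
  (forall (p : 'rV[R]_d) (q q' : 'rV[R]_d.+1),
      conv d s p -> conv d u p ->
      conv d.+1 s q -> proj d q = p ->
      conv d.+1 u q' -> proj d q' = p ->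
      lastc d q <= lastc d q').

End Defs.

Arguments moment {R} d t.
Arguments simplex_on {R} d s.
Arguments conv {R} d s p.
Arguments seqI {R} s u.
Arguments overlap {R} d s u.
Arguments interlacing_from {R} k s u.
Arguments interlacing {R} k s u.
Arguments proj {R} d q.
Arguments lastc {R} d q.
Arguments below {R} d s u.

Definition exactly_one4 (A B C D : Prop) : Prop :=
  (A \/ B \/ C \/ D) /\
  ~ (A /\ B) /\ ~ (A /\ C) /\ ~ (A /\ D) /\
  ~ (B /\ C) /\ ~ (B /\ D) /\ ~ (C /\ D).

(* Main.v *)
Require Import Defs.
From HB Require Import structures.
From mathcomp Require Import all_boot all_order all_algebra.
From mathcomp Require Import reals ring lra zify.
From Stdlib Require Import Classical.
Import Order.TTheory GRing.Theory Num.Theory.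
Local Open Scope ring_scope.

Section Aux.
Variable R : realType.
Implicit Types (l : R -> R).

Lemma sq_pos (x : R) : x != 0 -> 0 < x * x.
Proof. by case: (ltgtP x 0) => // h _; nra. Qed.

Lemma sg_tr (a b c : R) : 0 < a * b -> 0 < c * b -> 0 < a * c.
Proof. move=> h1 h2; nra. Qed.

Lemma sg_tr' (a b c : R) : 0 < a * b -> c * b < 0 -> a * c < 0.
Proof. move=> h1 h2; nra. Qed.

Lemma signpoly l (tl : seq R) (h : R) :
  sorted <%R (h :: tl) -> (forall t, t \in h :: tl -> l t != 0) ->
  exists P : {poly R}, exists n : nat, exists v : nat -> R,
   (forall t, t \in h :: tl -> 0 < l t * P.[t]) /\
   size P = n.+1 /\ lead_coef P = l (last h tl) /\
   (forall x, x <= h -> 0 < P.[x] * P.[h]) /\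
   (n < size (h :: tl))%N /\
   v n = last h tl /\ 0 < l (v 0%N) * l h /\
   (forall i, (i < n)%N -> v i < v i.+1 /\ l (v i) * l (v i.+1) < 0) /\
   (forall i, (i <= n)%N -> v i \in h :: tl) /\
   (n.+1 = size (h :: tl) -> forall i, (i.+1 < size (h :: tl))%N ->
       l (nth 0 (h :: tl) i) * l (nth 0 (h :: tl) i.+1) < 0).
Proof.
elim: tl h => [|t' tl IH] h.
  move=> _ nz; have hnz := nz h (mem_head _ _).
  exists (l h)%:P, 0%N, (fun _ => h).
  split; first by move=> t; rewrite inE => /eqP ->; rewrite hornerC sq_pos.
  split; first by rewrite size_polyC hnz.
  split; first by rewrite lead_coefC.
  split; first by move=> x _; rewrite !hornerC sq_pos.
  split; first by [].
  split; first by [].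
  split; first by rewrite sq_pos.
  split; first by [].
  split; first by move=> i _; rewrite mem_head.
  by move=> _ [|i].
move=> /= /andP [hlt hpath] nz.
have hs : sorted <%R (t' :: tl) by [].
have nz' : forall t, t \in t' :: tl -> l t != 0.
  by move=> t tin; apply: nz; rewrite inE tin orbT.
have Hge : forall s, s \in t' :: tl -> t' <= s.
  move=> s; rewrite inE => /orP [/eqP -> //|sin].
  have := order_path_min (@lt_trans _ R) hpath => /allP /(_ s sin) /ltW //.
have Hgt : forall s, s \in t' :: tl -> h < s.
  by move=> s /Hge; apply: lt_le_trans.
have [P [n [v [Hpos [Hsz [Hlead [Hinv [Hn [Hlast [Hv0 [Hch [Hmem Hf]]]]]]]]]]]]
  := IH t' hs nz'.
have lh := nz h (mem_head _ _).
have lt' := nz' t' (mem_head _ _).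
have Pt' := Hpos t' (mem_head _ _).
have Ph : 0 < P.[h] * P.[t'] by apply: Hinv; apply: ltW.
case: (ltrP 0 (l h * l t')) => [same|opp].
  exists P, n, v.
  split.
    move=> t; rewrite inE => /orP [/eqP ->|tin]; last exact: Hpos.
    have : 0 < (l h * l t') * (P.[h] * P.[t']) by apply: mulr_gt0.
    move=> H; nra.
  split; first by [].
  split; first by [].
  split.
    move=> x xh; apply: (@sg_tr _ (P.[t'])); first by apply: Hinv; apply: (le_trans xh); apply: ltW.
    by [].
  split; first by rewrite /=; apply: leqW.
  split; first by [].
  split; first exact: (sg_tr _ _ _ Hv0 same).
  split; first by [].
  split; first by move=> i /Hmem tin; rewrite in_cons tin orbT.
  by move=> E; exfalso; move: Hn E => /=; lia.
have opp' : l h * l t' < 0.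
  by rewrite lt_neqAle opp andbT mulf_neq0.
set c := (h + t') / 2.
have hc : h < c by rewrite /c; lra.
have ct : c < t' by rewrite /c; lra.
have Pnz : P != 0 by rewrite -size_poly_eq0 Hsz.
exists (P * ('X - c%:P)), n.+1, (fun i => if i is k.+1 then v k else h).
split.
  move=> t; rewrite inE => /orP [/eqP ->|tin].
    rewrite hornerM hornerXsubC.
    have : (l h * l t') * (P.[h] * P.[t']) < 0 by rewrite pmulr_llt0.
    move=> H; nra.
  rewrite hornerM hornerXsubC mulrA; apply: mulr_gt0; first exact: Hpos.
  by have := Hge t tin; rewrite subr_gt0; apply: lt_le_trans.
split.
  have Xnz : ('X - c%:P) != 0 by rewrite -size_poly_eq0 size_XsubC.
  have E2 : size ('X - c%:P) = 2%N by rewrite size_XsubC.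
  by rewrite size_mul // Hsz E2 addn2.
split; first by rewrite lead_coefM lead_coefXsubC mulr1.
split.
  move=> x xh; rewrite !hornerM !hornerXsubC.
  have H1 : 0 < P.[x] * P.[h].
    apply: (@sg_tr _ (P.[t'])); last by [].
    by apply: Hinv; apply: (le_trans xh); apply: ltW.
  have H2 : x - c < 0 by rewrite subr_lt0; apply: le_lt_trans hc.
  have H3 : h - c < 0 by rewrite subr_lt0.
  have H4 : 0 < (x - c) * (h - c) by nra.
  have := mulr_gt0 H1 H4; move=> H; nra.
split; first by [].
split; first by [].
split; first by rewrite sq_pos.
split.
  move=> [|i] /=.
    move=> _; split; first by apply: Hgt; apply: Hmem.
    by rewrite mulrC; exact: (sg_tr' _ _ _ Hv0 opp').
  by move=> /Hch.
split.
  move=> [|i] /=; first by rewrite mem_head.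
  by move=> /Hmem tin; rewrite in_cons tin orbT.
move=> E [|i] /=; first by move=> _; exact: opp'.
move=> iS; apply: Hf => //.
by move: E => /= [] ->.
Qed.


Lemma sum_pos_seq (f : R -> R) h tl :
  (forall t, t \in h :: tl -> 0 < f t) -> 0 < \sum_(t <- h :: tl) f t.
Proof.
move=> H; rewrite big_cons.
have H1 : 0 < f h by apply: H; rewrite mem_head.
have H2 : 0 <= \sum_(t <- tl) f t.
  rewrite big_seq; apply: sumr_ge0 => t tin; apply: ltW; apply: H.
  by rewrite in_cons tin orbT.
lra.
Qed.

Lemma poly_sum l (r : seq R) (P : {poly R}) :
  \sum_(t <- r) l t * P.[t] =
  \sum_(i < size P) P`_i * \sum_(t <- r) l t * t ^+ i.
Proof.
under eq_bigr do rewrite horner_coef mulr_sumr.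
rewrite exchange_big /=; apply: eq_bigr => i _.
by rewrite mulr_sumr; apply: eq_bigr => t _; rewrite mulrCA.
Qed.

Lemma moment_pos l h tl (D : nat) :
  sorted <%R (h :: tl) -> (forall t, t \in h :: tl -> l t != 0) ->
  (forall k, (k <= D)%N -> \sum_(t <- h :: tl) l t * t ^+ k = 0) ->
  exists n : nat, exists v : nat -> R,
   (D < n)%N /\ (n < size (h :: tl))%N /\ v n = last h tl /\
   (forall i, (i < n)%N -> v i < v i.+1 /\ l (v i) * l (v i.+1) < 0) /\
   (forall i, (i <= n)%N -> v i \in h :: tl) /\
   (n.+1 = size (h :: tl) -> forall i, (i.+1 < size (h :: tl))%N ->
       l (nth 0 (h :: tl) i) * l (nth 0 (h :: tl) i.+1) < 0) /\
   (n = D.+1 -> 0 < l (last h tl) * \sum_(t <- h :: tl) l t * t ^+ D.+1).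
Proof.
move=> hs nz Hmom.
have [P [n [v [Hpos [Hsz [Hlead [Hinv [Hn [Hlast [Hv0 [Hch [Hmem Hf]]]]]]]]]]]]
  := @signpoly l tl h hs nz.
have Hs : 0 < \sum_(t <- h :: tl) l t * P.[t] by apply: sum_pos_seq.
rewrite poly_sum in Hs.
have HD : (D < n)%N.
  rewrite ltnNge; apply/negP => le; move: Hs; rewrite big1 ?ltxx // => i _.
  rewrite Hmom ?mulr0 //; have := ltn_ord i; move: (nat_of_ord i) => k; rewrite Hsz; lia.
exists n, v; do 6 (split; first by []).
move=> En; move: Hs; rewrite Hsz En big_ord_recr /= big1 ?add0r; last first.
  by move=> i _; rewrite Hmom ?mulr0 // -ltnS ltn_ord.
by rewrite -Hlead lead_coefE Hsz En.
Qed.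

Lemma dep_main l (U : seq R) (D : nat) :
  uniq U -> (forall k, (k <= D)%N -> \sum_(t <- U) l t * t ^+ k = 0) ->
  (exists t, t \in U /\ l t != 0) ->
  exists n : nat, exists v : nat -> R,
   (D < n)%N /\ (n < size U)%N /\
   (forall i, (i < n)%N -> v i < v i.+1 /\ l (v i) * l (v i.+1) < 0) /\
   (forall i, (i <= n)%N -> v i \in U) /\
   (n = D.+1 -> 0 < l (v n) * \sum_(t <- U) l t * t ^+ D.+1) /\
   (n.+1 = size U -> sorted <%R U -> v n = last 0 U /\ forall i, (i.+1 < size U)%N ->
       l (nth 0 U i) * l (nth 0 U i.+1) < 0).
Proof.
move=> uU Hmom [t0 [t0in t0nz]].
set ts := [seq t <- sort <=%R U | l t != 0].
have sts : sorted <%R ts.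
  by apply: sorted_filter; [exact: lt_trans| rewrite sort_lt_sorted].
have Hsum : forall g : R -> R,
    \sum_(t <- ts) l t * g t = \sum_(t <- U) l t * g t.
  move=> g; rewrite big_filter big_rmcond; last first.
    by move=> t /negPn /eqP ->; rewrite mul0r.
  by apply: perm_big; rewrite perm_sort.
have memts : forall t, (t \in ts) = (l t != 0) && (t \in U).
  by move=> t; rewrite mem_filter mem_sort.
have szts : (size ts <= size U)%N.
  by rewrite size_filter -(size_sort <=%R U) count_size.
case E: ts => [|h tl].
  by move: (memts t0); rewrite E t0nz t0in.
rewrite E in sts.
have nz : forall t, t \in h :: tl -> l t != 0.
  by move=> t; rewrite -E memts => /andP [].
have Hm : forall k, (k <= D)%N -> \sum_(t <- h :: tl) l t * t ^+ k = 0.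
  by move=> k kD; rewrite -E (Hsum (fun t => t ^+ k)) Hmom.
have [n [v [HD [Hn [Hlast [Hch [Hmem [Hf Hfin]]]]]]]] := @moment_pos l h tl D sts nz Hm.
exists n, v.
split; first by [].
split; first by rewrite -E in Hn; apply: leq_trans Hn szts.
split; first by [].
split; first by move=> i /Hmem; rewrite -E memts => /andP [].
split.
  move=> En; rewrite Hlast -(Hsum (fun t => t ^+ D.+1)) E; exact: Hfin.
move=> Esz sU.
have Ets : ts = U.
  have : size ts = size U.
    by apply/eqP; rewrite eqn_leq szts -Esz; rewrite -E in Hn.
  rewrite size_filter -(size_sort <=%R U) => /eqP; rewrite -all_count.
  move=> /all_filterP; rewrite /ts => ->; apply: sort_le_id.
  by move: sU; rewrite lt_sorted_uniq_le => /andP [].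
rewrite -Ets E; split; first by rewrite Hlast.
by apply: Hf; rewrite -E Ets.
Qed.


Lemma sum_transfer (V : zmodType) (a b : seq R) (f : R -> V) :
  uniq a -> uniq b -> (forall t, f t != 0 -> (t \in a) = (t \in b)) ->
  \sum_(t <- a) f t = \sum_(t <- b) f t.
Proof.
move=> ua ub H.
have E : forall c : seq R, \sum_(t <- c) f t = \sum_(t <- [seq t <- c | f t != 0]) f t.
  by move=> c; rewrite big_filter; symmetry; apply: big_rmcond => t /negPn /eqP.
rewrite (E a) (E b); apply: perm_big; apply: uniq_perm; try exact: filter_uniq.
move=> t; rewrite !mem_filter; case: (boolP (f t != 0)) => //= nz.
exact: H.
Qed.

Lemma coord (D : nat) (a : seq R) (w : R -> R) (j : 'I_D) :
  (\sum_(t <- a) w t *: moment D t) 0 j = \sum_(t <- a) w t * t ^+ j.+1.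
Proof. by rewrite summxE; apply: eq_bigr => t _; rewrite mxE /moment mxE. Qed.

Definition ext (a : seq R) (w : R -> R) (t : R) := if t \in a then w t else 0.

Lemma ext_sum (V : zmodType) (a U : seq R) (w : R -> R) (F : R -> R -> V) :
  uniq a -> uniq U -> {subset a <= U} -> (forall t, F 0 t = 0) ->
  \sum_(t <- a) F (w t) t = \sum_(t <- U) F (ext a w t) t.
Proof.
move=> ua uU sub F0.
rewrite -(@sum_transfer _ a U) //; last first.
  move=> t; rewrite /ext; case: ifP => [tin _|]; last by rewrite F0 eqxx.
  by rewrite (sub _ tin).
by apply: eq_big_seq => t tin; rewrite /ext tin.
Qed.

Lemma conv_sub (D : nat) (a' a : seq R) (p : 'rV[R]_D) :
  uniq a' -> uniq a -> {subset a' <= a} -> conv D a' p -> conv D a p.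
Proof.
move=> ua' ua sub [c [c0 [c1 cp]]].
exists (ext a' c); split.
  by move=> t _; rewrite /ext; case: ifP => // /c0.
split.
  by rewrite -c1; symmetry; exact: (@ext_sum _ a' a c (fun x _ => x)).
rewrite cp; exact: (@ext_sum _ a' a c (fun x t => x *: moment D t) ua' ua sub (fun t => scale0r _)).
Qed.

Lemma indep (D : nat) (a : seq R) (f : R -> R) :
  uniq a -> (size a <= D.+1)%N ->
  (forall k, (k <= D)%N -> \sum_(t <- a) f t * t ^+ k = 0) ->
  forall t, t \in a -> f t = 0.
Proof.
move=> ua sa Hm t tin; apply/eqP; apply/negPn/negP => nz.
have [n [v [HD [Hn _]]]] := @dep_main f a D ua Hm (ex_intro _ t (conj tin nz)).
move: HD Hn sa; lia.
Qed.

Lemma alt_sign (l : R -> R) (v : nat -> R) (n : nat) :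
  (0 < n)%N -> (forall i, (i < n)%N -> l (v i) * l (v i.+1) < 0) ->
  forall j i, (j + i <= n)%N -> 0 < (-1) ^+ i * (l (v j) * l (v (j + i)%N)).
Proof.
move=> n0 Hch j; elim=> [|i IH] ji.
  rewrite expr0 mul1r addn0; apply: sq_pos.
  have jn' : (j <= n)%N by rewrite addn0 in ji.
  case: (ltnP j n) => jn.
    by have := Hch j jn; apply: contraTneq => ->; rewrite mul0r ltxx.
  have jE : j = n by apply/eqP; rewrite eqn_leq jn' jn.
  have Hn1 : (n.-1 < n)%N by lia.
  have := Hch _ Hn1; rewrite prednK // -jE.
  by apply: contraTneq => ->; rewrite mulr0 ltxx.
have ji' : (j + i <= n)%N by lia.
have H1 := IH ji'.
have ji2 : (j + i < n)%N by lia.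
have H2 := Hch _ ji2.
have H1' : 0 < ((-1) ^+ i * l (v j)) * l (v (j + i)%N) by rewrite -mulrA.
have H2' : l (v (j + i).+1) * l (v (j + i)%N) < 0 by rewrite mulrC.
have H5 := sg_tr' _ _ _ H1' H2'.
rewrite exprS addnS; nra.
Qed.


Lemma chain_inter (a b : seq R) (l : R -> R) (n : nat) (v : nat -> R) :
  (0 < n)%N -> (forall i, (i < n)%N -> v i < v i.+1 /\ l (v i) * l (v i.+1) < 0) ->
  (forall t, 0 < l t -> t \in a) -> (forall t, l t < 0 -> t \in b) ->
  forall j k, (j + k <= n.+1)%N ->
  (0 < l (v j) -> interlacing_from k a b) /\ (l (v j) < 0 -> interlacing_from k b a).
Proof.
move=> n0 Hch Ha Hb.
have Hs := @alt_sign l v n n0 (fun i hi => (Hch i hi).2).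
move=> j k jk; split => hj; exists (fun i => v (j + i)%N); split.
- by move=> i ik; rewrite addnS; apply: (Hch _ _).1; lia.
- move=> i ik; have ji : (j + i <= n)%N by lia.
  have := Hs j i ji; rewrite -signr_odd; case: (odd i) => /= H.
    by apply: Hb; nra.
  by apply: Ha; nra.
- by move=> i ik; rewrite addnS; apply: (Hch _ _).1; lia.
- move=> i ik; have ji : (j + i <= n)%N by lia.
  have := Hs j i ji; rewrite -signr_odd; case: (odd i) => /= H.
    by apply: Ha; nra.
  by apply: Hb; nra.
Qed.

Definition Ldiff (a b : seq R) (al be : R -> R) (t : R) := ext a al t - ext b be t.

Lemma chain_from_weights (D : nat) (a b : seq R) (al be : R -> R) :
  uniq a -> uniq b -> (forall t, t \in a -> 0 <= al t) -> (forall t, t \in b -> 0 <= be t) ->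
  (forall k, (k <= D)%N -> \sum_(t <- a) al t * t ^+ k = \sum_(t <- b) be t * t ^+ k) ->
  (forall t, 0 < Ldiff a b al be t -> t \in a) /\
  (forall t, Ldiff a b al be t < 0 -> t \in b) /\
  ((forall t, t \in a ++ b -> ext a al t = ext b be t) \/
   exists n : nat, exists v : nat -> R, (D < n)%N /\
     (forall i, (i < n)%N -> v i < v i.+1 /\
        Ldiff a b al be (v i) * Ldiff a b al be (v i.+1) < 0) /\
     (n = D.+1 -> 0 < Ldiff a b al be (v n) *
        (\sum_(t <- a) al t * t ^+ D.+1 - \sum_(t <- b) be t * t ^+ D.+1))).
Proof.
move=> ua ub a0 b0 Hm.
set L := Ldiff a b al be.
set U := undup (a ++ b).
have uU : uniq U := undup_uniq _.
have sa : {subset a <= U} by move=> t tin; rewrite mem_undup mem_cat tin.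
have sb : {subset b <= U} by move=> t tin; rewrite mem_undup mem_cat tin orbT.
have Hsum : forall g : R -> R,
    \sum_(t <- U) L t * g t = \sum_(t <- a) al t * g t - \sum_(t <- b) be t * g t.
  move=> g.
  rewrite (@ext_sum _ a U al (fun x t => x * g t)) ?(@ext_sum _ b U be (fun x t => x * g t)) //;
    try by move=> t; rewrite mul0r.
  by rewrite -sumrB; apply: eq_bigr => t _; rewrite /L /Ldiff mulrBl.
have ea : forall t, 0 <= ext a al t by move=> t; rewrite /ext; case: ifP => // /a0.
have eb : forall t, 0 <= ext b be t by move=> t; rewrite /ext; case: ifP => // /b0.
split.
  move=> t; rewrite /L /Ldiff; case: (boolP (t \in a)) => // tn.
  by rewrite {1}/ext (negbTE tn) => H; have := eb t; lra.
split.
  move=> t; rewrite /L /Ldiff; case: (boolP (t \in b)) => // tn.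
  by rewrite {2}/ext (negbTE tn) => H; have := ea t; lra.
case: (boolP (all (fun t => L t == 0) U)) => [/allP H | /allPn [t tin tnz]].
  left => t tin; apply/eqP; rewrite -subr_eq0; apply: (H t).
  by rewrite mem_undup.
right.
have Hm' : forall k, (k <= D)%N -> \sum_(t <- U) L t * t ^+ k = 0.
  by move=> k kD; rewrite Hsum Hm // subrr.
have [n [v [HD [_ [Hch [_ [Hfin _]]]]]]] := @dep_main L U D uU Hm' (ex_intro _ t (conj tin tnz)).
exists n, v; split => //; split => //.
by move=> En; rewrite -Hsum; apply: Hfin.
Qed.


Definition vsq (v : nat -> R) (m : nat) := [seq v i | i <- iota 0 m].

Lemma dep_chain (D : nat) (v : nat -> R) :
  (forall i, (i.+1 < D.+2)%N -> v i < v i.+1) ->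
  exists mu : R -> R,
   (forall t, mu t != 0 -> t \in vsq v D.+2) /\
   (forall i, (i < D.+2)%N -> 0 < (-1) ^+ i * mu (v i)) /\
   (forall k, (k <= D)%N -> \sum_(t <- vsq v D.+2) mu t * t ^+ k = 0) /\
   0 < (-1) ^+ D.+1 * \sum_(t <- vsq v D.+2) mu t * t ^+ D.+1.
Proof.
move=> Hinc.
set vs := vsq v D.+2.
have szv : size vs = D.+2 by rewrite /vs /vsq size_map size_iota.
have nthv : forall i, (i < D.+2)%N -> nth 0 vs i = v i.
  by move=> i hi; rewrite /vs /vsq (nth_map 0%N) ?size_iota // nth_iota.
have svs : sorted <%R vs.
  apply/(sortedP 0) => i; rewrite szv => hi.
  by rewrite !nthv //; [apply: Hinc | apply: ltnW].
have uvs : uniq vs by move: svs; rewrite lt_sorted_uniq_le => /andP [].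
set A := \matrix_(i < D.+2, k < D.+1) (v i) ^+ k.
have kA : kermx A != 0.
  rewrite kermx_eq0 /row_free; apply/negP => /eqP E.
  by have := rank_leq_col A; rewrite E ltnn.
have [i0 [j0 nz]] : exists i0 j0, kermx A i0 j0 != 0.
  case: (boolP [exists i, exists j, kermx A i j != 0]).
    by move=> /existsP [i0 /existsP [j0 nz]]; exists i0, j0.
  move=> /existsPn H; exfalso; move/negP: kA; apply; apply/eqP/matrixP => i j.
  by rewrite [RHS]mxE; have := H i => /existsPn /(_ j) /negPn /eqP.
set x := row i0 (kermx A).
have xA : x *m A = 0 by rewrite /x -row_mul mulmx_ker row0.
set lam := fun t => \sum_(i < D.+2) (if v i == t then x 0 i else 0).
have lamv : forall j : 'I_D.+2, lam (v j) = x 0 j.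
  move=> j; rewrite /lam (bigD1 j) //= eqxx big1 ?addr0 // => i ne.
  rewrite ifF //; apply/negbTE.
  by rewrite -!nthv // nth_uniq // szv.
have lamout : forall t, t \notin vs -> lam t = 0.
  move=> t tn; rewrite /lam big1 // => i _; rewrite ifF //; apply/negbTE.
  apply: contra tn => /eqP <-; apply: map_f; by rewrite mem_iota /= add0n.
have Hm : forall k, (k <= D)%N -> \sum_(t <- vs) lam t * t ^+ k = 0.
  move=> k kD.
  have -> : \sum_(t <- vs) lam t * t ^+ k = (x *m A) 0 (Ordinal (kD : (k < D.+1)%N)).
    rewrite /vs /vsq big_map -[iota 0 D.+2]/(index_iota 0 D.+2) big_mkord mxE.
    by apply: eq_bigr => i _; rewrite lamv /A !mxE.
  by rewrite xA mxE.
have x0 : lam (v j0) != 0 by rewrite lamv /x mxE.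
have vj0 : v j0 \in vs by rewrite -nthv // mem_nth // szv.
have [n [w [HD [Hn [_ [_ [Hfin Hf]]]]]]] :=
  @dep_main lam vs D uvs Hm (ex_intro _ (v j0) (conj vj0 x0)).
have En : n = D.+1 by move: HD Hn; rewrite szv; lia.
have Esz : n.+1 = size vs by rewrite En szv.
have [Hlast Halt] := Hf Esz svs.
have Halt' : forall i, (i < D.+1)%N -> lam (v i) * lam (v i.+1) < 0.
  move=> i hi; rewrite -!nthv //; last by apply: ltnW.
  by apply: Halt; rewrite szv.
have alt := @alt_sign lam v D.+1 (ltn0Sn _) Halt' 0%N.
have E1 : nth 0 vs (size vs).-1 = v D.+1 by rewrite szv; apply: nthv.
have Hfin' := Hfin En; rewrite Hlast -nth_last E1 in Hfin'.
exists (fun t => lam (v 0%N) * lam t).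
split.
  move=> t; apply: contraR => /lamout ->; by rewrite mulr0.
split.
  by move=> i hi; have := alt i hi; rewrite add0n.
split.
  move=> k kD; under eq_bigr do rewrite -mulrA.
  by rewrite -mulr_sumr Hm // mulr0.
under eq_bigr do rewrite -mulrA.
rewrite -mulr_sumr.
have A1 := alt D.+1 (leqnn _); rewrite add0n mulrA in A1.
have A2 : 0 < (\sum_(t <- vs) lam t * t ^+ D.+1) * lam (v D.+1) by rewrite mulrC.
have := sg_tr _ _ _ A1 A2; by rewrite mulrA.
Qed.


Definition pp (x : R) := (`|x| + x) / 2.
Definition nn (x : R) := (`|x| - x) / 2.

Lemma pp_ge0 x : 0 <= pp x.
Proof. rewrite /pp; case: (lerP 0 x) => h; [rewrite ger0_norm // | rewrite ltr0_norm //]; lra. Qed.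
Lemma nn_ge0 x : 0 <= nn x.
Proof. rewrite /nn; case: (lerP 0 x) => h; [rewrite ger0_norm // | rewrite ltr0_norm //]; lra. Qed.
Lemma pp_nn x : pp x - nn x = x.
Proof. rewrite /pp /nn; lra. Qed.
Lemma pp_pos x : 0 < x -> pp x = x.
Proof. by move=> h; rewrite /pp ger0_norm ?ltW //; lra. Qed.
Lemma nn_neg x : x < 0 -> nn x = - x.
Proof. by move=> h; rewrite /nn ltr0_norm //; lra. Qed.
Lemma pp_nz x : pp x != 0 -> 0 < x.
Proof.
rewrite /pp; case: (lerP x 0) => h //; rewrite ler0_norm // => /eqP []; lra.
Qed.
Lemma nn_nz x : nn x != 0 -> x < 0.
Proof.
rewrite /nn; case: (lerP 0 x) => h //; rewrite ger0_norm // => /eqP []; lra.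
Qed.

Lemma vsq_size v m : size (vsq v m) = m.
Proof. by rewrite /vsq size_map size_iota. Qed.

Lemma vsq_nth v m i : (i < m)%N -> nth 0 (vsq v m) i = v i.
Proof. by move=> hi; rewrite /vsq (nth_map 0%N) ?size_iota // nth_iota. Qed.

Lemma vsq_uniq v m : (forall i, (i.+1 < m)%N -> v i < v i.+1) -> uniq (vsq v m).
Proof.
move=> Hinc.
have : sorted <%R (vsq v m).
  apply/(sortedP 0) => i; rewrite vsq_size => hi.
  by rewrite !vsq_nth //; [apply: Hinc | apply: ltnW].
by rewrite lt_sorted_uniq_le => /andP [].
Qed.

Lemma vsq_mem v m t : t \in vsq v m -> exists i, (i < m)%N /\ t = v i.
Proof. by move=> /mapP [i]; rewrite mem_iota add0n => /andP [_ hi] ->; exists i. Qed.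


Lemma pts (D : nat) (a b : seq R) :
  uniq a -> uniq b -> interlacing_from D.+2 a b ->
  exists (p : 'rV[R]_D) (qa qb : 'rV[R]_D.+1),
   conv D a p /\ conv D b p /\ conv D.+1 a qa /\ proj D qa = p /\
   conv D.+1 b qb /\ proj D qb = p /\
   0 < (-1) ^+ D.+1 * (lastc D qa - lastc D qb) /\
   ((size a <= D.+1)%N -> (size b <= D.+1)%N -> ~ conv D (seqI a b) p).
Proof.
move=> ua ub [v [Hinc Hmem]].
have [mu [Hsupp [Hsgn [Hm Htop]]]] := @dep_chain D v Hinc.
set vs := vsq v D.+2.
have uvs : uniq vs by apply: vsq_uniq.
have Ha : forall t, 0 < mu t -> t \in a.
  move=> t ht.
  have [i [hi E]] := @vsq_mem v D.+2 t (Hsupp t (lt0r_neq0 ht)).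
  rewrite E in ht *.
  have := Hmem i hi; have := Hsgn i hi; rewrite -signr_odd.
  case: (odd i) => /= hs hm; last by [].
  by exfalso; move: hs; rewrite expr1; lra.
have Hb : forall t, mu t < 0 -> t \in b.
  move=> t ht.
  have [i [hi E]] := @vsq_mem v D.+2 t (Hsupp t (ltr0_neq0 ht)).
  rewrite E in ht *.
  have := Hmem i hi; have := Hsgn i hi; rewrite -signr_odd.
  case: (odd i) => /= hs hm; first by [].
  by exfalso; move: hs; rewrite expr0; lra.
set S := \sum_(t <- vs) pp (mu t).
have Spos : 0 < S.
  have v0 : v 0%N \in vs by rewrite -(@vsq_nth v D.+2 0%N (ltn0Sn D.+1)) mem_nth // vsq_size.
  rewrite /S (bigD1_seq _ v0 uvs) /=.
  have h0 := Hsgn 0%N (ltn0Sn _); rewrite expr0 mul1r in h0.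
  rewrite pp_pos //.
  have : 0 <= \sum_(i <- vs | i != v 0%N) pp (mu i) by apply: sumr_ge0 => i _; apply: pp_ge0.
  lra.
have SN : \sum_(t <- vs) nn (mu t) = S.
  have H0 := Hm 0%N (leq0n _).
  have : \sum_(t <- vs) pp (mu t) - \sum_(t <- vs) nn (mu t) = 0.
    rewrite -sumrB -[RHS]H0; apply: eq_bigr => t _; by rewrite pp_nn expr0 mulr1.
  rewrite -/S; lra.
set wa := fun t => pp (mu t) / S.
set wb := fun t => nn (mu t) / S.
have wa0 : forall t, 0 <= wa t by move=> t; rewrite /wa divr_ge0 ?pp_ge0 // ltW.
have wb0 : forall t, 0 <= wb t by move=> t; rewrite /wb divr_ge0 ?nn_ge0 // ltW.
have Ta : forall (V : zmodType) (F : R -> V), (forall t, wa t = 0 -> F t = 0) ->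
    \sum_(t <- a) F t = \sum_(t <- vs) F t.
  move=> V F HF; apply: sum_transfer => // t Ft.
  have : wa t != 0 by apply: contra Ft => /eqP /HF ->.
  rewrite /wa mulf_eq0 negb_or => /andP [/pp_nz hp _].
  rewrite (Ha t hp); symmetry; apply: Hsupp; exact: lt0r_neq0.
have Tb : forall (V : zmodType) (F : R -> V), (forall t, wb t = 0 -> F t = 0) ->
    \sum_(t <- b) F t = \sum_(t <- vs) F t.
  move=> V F HF; apply: sum_transfer => // t Ft.
  have : wb t != 0 by apply: contra Ft => /eqP /HF ->.
  rewrite /wb mulf_eq0 negb_or => /andP [/nn_nz hp _].
  rewrite (Hb t hp); symmetry; apply: Hsupp; exact: ltr0_neq0.
have Tak : forall k, \sum_(t <- a) wa t * t ^+ k = \sum_(t <- vs) wa t * t ^+ k.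
  by move=> k; apply: Ta => t ->; rewrite mul0r.
have Tbk : forall k, \sum_(t <- b) wb t * t ^+ k = \sum_(t <- vs) wb t * t ^+ k.
  by move=> k; apply: Tb => t ->; rewrite mul0r.
have Hdiff : forall k, \sum_(t <- a) wa t * t ^+ k - \sum_(t <- b) wb t * t ^+ k =
    (\sum_(t <- vs) mu t * t ^+ k) / S.
  move=> k; rewrite Tak Tbk -sumrB mulr_suml; apply: eq_bigr => t _.
  by rewrite /wa /wb -[in RHS](pp_nn (mu t)); ring.
have suma : \sum_(t <- a) wa t = 1.
  rewrite (Ta _ wa) // /wa -mulr_suml -/S divff //; exact: lt0r_neq0.
have sumb : \sum_(t <- b) wb t = 1.
  rewrite (Tb _ wb) // /wb -mulr_suml SN divff //; exact: lt0r_neq0.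
set Pa := fun D' => \sum_(t <- a) wa t *: moment D' t.
set Pb := fun D' => \sum_(t <- b) wb t *: moment D' t.
have cPa : forall D', conv D' a (Pa D').
  by move=> D'; exists wa; split => //; move=> t _; apply: wa0.
have cPb : forall D', conv D' b (Pb D').
  by move=> D'; exists wb; split => //; move=> t _; apply: wb0.
have Pab : Pa D = Pb D.
  apply/rowP => j; rewrite /Pa /Pb !coord; apply/eqP; rewrite -subr_eq0 Hdiff Hm ?mul0r //.
have prA : proj D (Pa D.+1) = Pa D.
  by apply/rowP => j; rewrite /proj mxE /Pa !coord.
have prB : proj D (Pb D.+1) = Pb D.
  by apply/rowP => j; rewrite /proj mxE /Pb !coord.
exists (Pa D), (Pa D.+1), (Pb D.+1).
split; first by [].
split; first by rewrite Pab.
split; first by [].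
split; first by [].
split; first by [].
split; first by rewrite Pab.
split.
  rewrite /lastc /Pa /Pb !coord /= Hdiff mulrA; apply: divr_gt0 => //.
move=> sa sb [c [c0 [c1 cp]]].
set I := seqI a b.
have uI : uniq I by apply: filter_uniq.
have sIb : {subset I <= b} by move=> t; rewrite mem_filter => /andP [].
have Hb' : forall k, (k <= D)%N -> \sum_(t <- b) wb t * t ^+ k = \sum_(t <- I) c t * t ^+ k.
  case=> [|k] kD.
    by rewrite !(eq_bigr _ (fun t _ => mulr1 _)) sumb c1.
  have E : (Pb D) 0 (Ordinal kD) = (Pa D) 0 (Ordinal kD) by rewrite Pab.
  by rewrite {1}/Pb coord cp coord in E.
have Ieq := @indep D b (fun t => wb t - ext I c t) ub sb.
have Ieq' : forall t, t \in b -> wb t = ext I c t.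
  move=> t tin; apply/eqP; rewrite -subr_eq0; apply/eqP; apply: Ieq => //.
  move=> k kD; under eq_bigr do rewrite mulrBl.
  rewrite sumrB Hb' // (@ext_sum _ I b c (fun x t => x * t ^+ k)) //; last by move=> t'; rewrite mul0r.
  by rewrite subrr.
have allin : {subset vs <= a}.
  move=> t /(@vsq_mem v D.+2 t) [i [hi ->]].
  have := Hmem i hi; have := Hsgn i hi; rewrite -signr_odd.
  case: (odd i) => /= hs hm //.
  have hneg : mu (v i) < 0 by move: hs; rewrite expr1; lra.
  have := Ieq' _ hm; rewrite /ext; case: ifP => [|_].
    by rewrite mem_filter => /andP [].
  by rewrite /wb nn_neg // => /eqP; rewrite mulf_eq0 invr_eq0 oppr_eq0 (negbTE (ltr0_neq0 hneg)) (negbTE (lt0r_neq0 Spos)).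
have := uniq_leq_size uvs allin; rewrite vsq_size => H.
by have := leq_trans H sa; rewrite ltnn.
Qed.


Lemma ov_first (D : nat) (a b : seq R) (p : 'rV[R]_D) :
  uniq a -> uniq b -> conv D (seqI a b) p -> conv D a p /\ conv D b p.
Proof.
move=> ua ub c; have uI : uniq (seqI a b) by apply: filter_uniq.
split.
  by apply: (@conv_sub D (seqI a b) a p uI ua) => // t; rewrite mem_filter => /andP [].
by apply: (@conv_sub D (seqI a b) b p uI ub) => // t; rewrite mem_filter => /andP [].
Qed.

Lemma conv_moments (D : nat) (a : seq R) (p : 'rV[R]_D) (al : R -> R) :
  \sum_(t <- a) al t = 1 -> p = \sum_(t <- a) al t *: moment D t ->
  forall k (kD : (k < D)%N), p 0 (Ordinal kD) = \sum_(t <- a) al t * t ^+ k.+1.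
Proof. by move=> _ -> k kD; rewrite coord. Qed.

Lemma G (D : nat) (a b : seq R) :
  uniq a -> uniq b -> (size a <= D.+1)%N -> (size b <= D.+1)%N ->
  (overlap D a b <-> interlacing D.+2 a b).
Proof.
move=> ua ub sa sb; split.
  move=> [_ [p [[al [al0 [al1 alp]]] [[be [be0 [be1 bep]]] ncI]]]].
  have Hm : forall k, (k <= D)%N -> \sum_(t <- a) al t * t ^+ k = \sum_(t <- b) be t * t ^+ k.
    case=> [|k] kD.
      by rewrite !(eq_bigr _ (fun t _ => mulr1 _)) al1 be1.
    by rewrite -(@conv_moments D a p al al1 alp k kD) -(@conv_moments D b p be be1 bep k kD).
  have [Hpa [Hnb [Hz|[n [w [HD [Hch _]]]]]]] :=
    @chain_from_weights D a b al be ua ub al0 be0 Hm.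
    exfalso; apply: ncI; exists al.
    have uI : uniq (seqI a b) by apply: filter_uniq.
    have sI : {subset seqI a b <= a} by move=> t; rewrite mem_filter => /andP [].
    have Ee : forall t, t \in a -> ext (seqI a b) al t = al t.
      move=> t tin; rewrite /ext mem_filter tin andbT; case: ifP => // tnb.
      have := Hz t; rewrite mem_cat tin /= => /(_ isT).
      by rewrite /ext tin tnb.
    split; first by move=> t /sI; apply: al0.
    split.
      rewrite -al1 (@ext_sum _ (seqI a b) a al (fun x _ => x)) //.
      by apply: eq_big_seq => t /Ee.
    rewrite alp (@ext_sum _ (seqI a b) a al (fun x t => x *: moment D t)) //; last first.
      by move=> t; rewrite scale0r.
    by apply: eq_big_seq => t /Ee ->.
  have n0 : (0 < n)%N by apply: leq_ltn_trans HD.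
  have [h1 h2] := @chain_inter a b _ n w n0 Hch Hpa Hnb 0%N D.+2 HD.
  have := (Hch 0%N n0).2; case: (ltrP 0 (Ldiff a b al be (w 0%N))) => h.
    by move=> _; left; apply: h1.
  move=> H; right; apply: h2; rewrite lt_neqAle h andbT.
  by apply: contraTneq H => ->; rewrite mul0r ltxx.
move=> I; split; first by move=> p; apply: ov_first.
case: I => I.
  have [p [qa [qb [ca [cb [_ [_ [_ [_ [_ nc]]]]]]]]]] := @pts D a b ua ub I.
  by exists p; split => //; split => //; apply: nc.
have [p [qa [qb [cb [ca [_ [_ [_ [_ [_ nc]]]]]]]]]] := @pts D b a ub ua I.
exists p; split => //; split => //.
move=> c; apply: (nc sb sa); move: c; apply: conv_sub; try apply: filter_uniq => //.
by move=> t; rewrite !mem_filter => /andP [-> ->].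
Qed.

Definition Hprop (D : nat) (a b : seq R) :=
  forall (p : 'rV[R]_D) (q q' : 'rV[R]_D.+1),
      conv D a p -> conv D b p ->
      conv D.+1 a q -> proj D q = p ->
      conv D.+1 b q' -> proj D q' = p ->
      lastc D q <= lastc D q'.

Lemma sign_odd (D : nat) : odd D -> (-1) ^+ D.+1 = 1 :> R.
Proof. by move=> h; rewrite -signr_odd /= h. Qed.
Lemma sign_even (D : nat) : ~~ odd D -> (-1) ^+ D.+1 = -1 :> R.
Proof. by move=> h; rewrite -signr_odd /= (negbTE h) expr1. Qed.

Lemma H_fails (D : nat) (a b : seq R) :
  uniq a -> uniq b ->
  (if odd D then interlacing_from D.+2 a b else interlacing_from D.+2 b a) ->
  ~ Hprop D a b.
Proof.
move=> ua ub; case: (boolP (odd D)) => hD I H.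
  have [p [qa [qb [ca [cb [cqa [pa [cqb [pb [hs _]]]]]]]]]] := @pts D a b ua ub I.
  have := H p qa qb ca cb cqa pa cqb pb; rewrite sign_odd // mul1r in hs; lra.
have [p [qb [qa [cb [ca [cqb [pb [cqa [pa [hs _]]]]]]]]]] := @pts D b a ub ua I.
have := H p qa qb ca cb cqa pa cqb pb; rewrite sign_even // in hs; lra.
Qed.


Lemma H_holds (D : nat) (a b : seq R) :
  uniq a -> uniq b ->
  ~ (if odd D then interlacing_from D.+2 a b else interlacing_from D.+2 b a) ->
  Hprop D a b.
Proof.
move=> ua ub nI p q q' _ _ [al [al0 [al1 alq]]] pq [be [be0 [be1 beq]]] pq'.
have Hm : forall k, (k <= D)%N -> \sum_(t <- a) al t * t ^+ k = \sum_(t <- b) be t * t ^+ k.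
  case=> [|k] kD.
    by rewrite !(eq_bigr _ (fun t _ => mulr1 _)) al1 be1.
  have E : (proj D q) 0 (Ordinal kD) = (proj D q') 0 (Ordinal kD) by rewrite pq pq'.
  by rewrite /proj !mxE alq beq !coord in E.
have La : lastc D q = \sum_(t <- a) al t * t ^+ D.+1 by rewrite /lastc alq coord.
have Lb : lastc D q' = \sum_(t <- b) be t * t ^+ D.+1 by rewrite /lastc beq coord.
rewrite La Lb.
have [Hpa [Hnb [Hz|[n [w [HD [Hch Hfin]]]]]]] :=
  @chain_from_weights D a b al be ua ub al0 be0 Hm.
  set U := undup (a ++ b).
  have uU : uniq U := undup_uniq _.
  have sa : {subset a <= U} by move=> t tin; rewrite mem_undup mem_cat tin.
  have sb : {subset b <= U} by move=> t tin; rewrite mem_undup mem_cat tin orbT.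
  rewrite (@ext_sum _ a U al (fun x t => x * t ^+ D.+1)) //; last by move=> t; rewrite mul0r.
  rewrite (@ext_sum _ b U be (fun x t => x * t ^+ D.+1)) //; last by move=> t; rewrite mul0r.
  rewrite le_eqVlt; apply/orP; left; apply/eqP; apply: eq_big_seq => t.
  by rewrite mem_undup => /Hz ->.
set L := Ldiff a b al be.
have n0 : (0 < n)%N by apply: leq_ltn_trans HD.
have CI := @chain_inter a b L n w n0 Hch Hpa Hnb.
have nz : forall i, (i <= n)%N -> L (w i) != 0.
  move=> i hi; have := @alt_sign L w n n0 (fun i hi => (Hch i hi).2) i 0%N.
  rewrite addn0 => /(_ hi); apply: contraTneq => ->; by rewrite mul0r mulr0 ltxx.
have both : (D.+1 < n)%N -> interlacing_from D.+2 a b /\ interlacing_from D.+2 b a.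
  move=> hn.
  have [c1 c2] := CI 0%N D.+2 (ltnW hn).
  have [c3 c4] := CI 1%N D.+2 hn.
  have h01 : L (w 0%N) * L (w 1%N) < 0 := (Hch 0%N n0).2.
  case: (ltrP 0 (L (w 0%N))) => h0.
    split; first by apply: c1.
    by apply: c4; nra.
  have h0' : L (w 0%N) < 0 by rewrite lt_neqAle h0 andbT; apply: nz.
  split; last by apply: c2.
  by apply: c3; nra.
case: (ltngtP n D.+1) => hn.
- by move: HD hn; lia.
- by exfalso; apply: nI; case: (odd D); case: (both hn).
have Hf : 0 < L (w n) * (\sum_(t <- a) al t * t ^+ D.+1 - \sum_(t <- b) be t * t ^+ D.+1) := Hfin hn.
have alt := @alt_sign L w n n0 (fun i hi => (Hch i hi).2) 0%N n (leqnn _).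
rewrite add0n hn in alt.
have hle : (0 + D.+2 <= n.+1)%N by rewrite hn.
have [c1 c2] := CI 0%N D.+2 hle.
have Lwn : L (w n) < 0.
  move: alt; case: (boolP (odd D)) => hD.
    rewrite sign_odd // mul1r => alt.
    have h0 : L (w 0%N) < 0.
      case: (ltrgtP (L (w 0%N)) 0) => // h; exfalso.
        by apply: nI; rewrite hD; apply: c1.
      by have := nz 0%N (leq0n _); rewrite h eqxx.
    by rewrite hn; nra.
  rewrite sign_even // => alt.
  have h0 : 0 < L (w 0%N).
    case: (ltrgtP (L (w 0%N)) 0) => // h; exfalso.
      by apply: nI; rewrite (negbTE hD); apply: c2.
    by have := nz 0%N (leq0n _); rewrite h eqxx.
  by rewrite hn; nra.
nra.
Qed.

Lemma below_iff (D : nat) (a b : seq R) :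
  uniq a -> uniq b ->
  (below D a b <-> overlap D a b /\
     ~ (if odd D then interlacing_from D.+2 a b else interlacing_from D.+2 b a)).
Proof.
move=> ua ub; split.
  move=> [ov H]; split => // I; exact: (@H_fails D a b ua ub I H).
by move=> [ov nI]; split => //; apply: (@H_holds D a b ua ub nI).
Qed.

Lemma drop_inter (m : nat) (a b : seq R) :
  interlacing_from m.+1 a b -> interlacing_from m a b /\ interlacing_from m b a.
Proof.
move=> [x [xinc xmem]]; split.
  exists x; split; first by move=> i hi; apply: xinc; apply: ltnW.
  by move=> i hi; apply: xmem; apply: ltnW.
exists (fun i => x i.+1); split; first by move=> i hi; apply: xinc.
move=> i hi; have := xmem i.+1 hi; rewrite /=; by case: (odd i).
Qed.

Lemma comb_step (m : nat) (a b : seq R) (x y : nat -> R) (j : nat) :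
  (forall i, (i.+1 < m)%N -> x i < x i.+1) ->
  (forall i, (i < m)%N -> if odd i then x i \in b else x i \in a) ->
  (forall i, (i.+1 < m)%N -> y i < y i.+1) ->
  (forall i, (i < m)%N -> if odd i then y i \in a else y i \in b) ->
  (j < m)%N -> x j < y j -> interlacing_from m.+1 a b.
Proof.
move=> xinc xmem yinc ymem jm xy.
exists (fun i => if (i <= j)%N then x i else y i.-1); split.
  move=> i hi /=.
  case: (ltngtP i j) => hij.
  - by apply: xinc; apply: leq_ltn_trans hij jm.
  - have i0 : (0 < i)%N by apply: leq_ltn_trans hij.
    have E : i = i.-1.+1 by rewrite prednK.
    rewrite {2}E; apply: yinc; rewrite -E //.
  - by rewrite hij.
move=> i hi; case: (leqP i j) => hij.
  by apply: xmem; apply: leq_ltn_trans hij jm.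
have i0 : (0 < i)%N by apply: leq_ltn_trans hij.
have hi' : (i.-1 < m)%N by rewrite -ltnS prednK.
have := ymem i.-1 hi'.
have -> : odd i = ~~ odd i.-1 by rewrite -{1}(prednK i0) /=.
by case: (odd i.-1).
Qed.


Lemma comb (m : nat) (a b : seq R) :
  (size a < m)%N -> interlacing_from m a b -> interlacing_from m b a ->
  interlacing m.+1 a b.
Proof.
move=> sa [x [xinc xmem]] [y [yinc ymem]].
case: (classic (exists j, (j < m)%N /\ x j < y j)) => [[j [jm xy]] | H1].
  by left; apply: (@comb_step m a b x y j xinc xmem yinc ymem jm xy).
case: (classic (exists j, (j < m)%N /\ y j < x j)) => [[j [jm yx]] | H2].
  by right; apply: (@comb_step m b a y x j yinc ymem xinc xmem jm yx).
exfalso.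
have Eq : forall j, (j < m)%N -> x j = y j.
  move=> j jm; case: (ltgtP (x j) (y j)) => // h; exfalso.
    by apply: H1; exists j.
  by apply: H2; exists j.
have sub : {subset vsq x m <= a}.
  move=> t /(@vsq_mem x m t) [i [hi ->]].
  have := xmem i hi; have := ymem i hi; rewrite -(Eq i hi).
  by case: (odd i).
have := uniq_leq_size (@vsq_uniq x m xinc) sub; rewrite vsq_size => H.
by have := leq_ltn_trans H sa; rewrite ltnn.
Qed.

End Aux.

Theorem corollary2p5 (R : realType) (d : nat) (s u : seq R) :
  (0 < d)%N -> simplex_on d s -> simplex_on d u ->
  exactly_one4 (~ overlap d s u) (below d s u) (below d u s)
               (overlap d.+1 s u)
  /\ (~ overlap d s u <-> ~ interlacing d.+2 s u)
  /\ (below d s u <->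
        if odd d
        then interlacing_from d.+2 u s /\ ~ interlacing_from d.+2 s u
        else interlacing_from d.+2 s u /\ ~ interlacing_from d.+2 u s)
  /\ (below d u s <->
        if odd d
        then interlacing_from d.+2 s u /\ ~ interlacing_from d.+2 u s
        else interlacing_from d.+2 u s /\ ~ interlacing_from d.+2 s u)
  /\ (overlap d.+1 s u <-> interlacing d.+3 s u).
Proof.
move=> _ [us ss] [uu su].
have Gsu := @G R d s u us uu ss su.
have Gus := @G R d u s uu us su ss.
have G1 := @G R d.+1 s u us uu (leqW ss) (leqW su).
have Bsu := @below_iff R d s u us uu.
have Bus := @below_iff R d u s uu us.
have C1 : interlacing d.+3 s u <->
    interlacing_from d.+2 s u /\ interlacing_from d.+2 u s.
  split.
    by case=> /(@drop_inter R d.+2) [h1 h2]; split.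
  by move=> [h1 h2]; apply: (@comb R d.+2 s u ss h1 h2).
rewrite /interlacing in Gsu Gus G1 C1 *.
rewrite /exactly_one4.
move: Gsu Gus G1 Bsu Bus C1.
set P := interlacing_from d.+2 s u.
set Q := interlacing_from d.+2 u s.
set J := interlacing_from d.+3 s u \/ interlacing_from d.+3 u s.
case: (odd d) => Gsu Gus G1 Bsu Bus C1;
have := classic P; have := classic Q; tauto.
Qed.
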